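(* There is an absolute constant $c>0$ such that for all finite nonempty sets $\mathcal{A},\mathcal{B},\mathcal{C}$ of nonzero complex numbers, $$|\mathcal{A}\mathcal{C}+\mathcal{A}\mathcal{C}|\,|\mathcal{B}\mathcal{C}+\mathcal{B}\mathcal{C}|\geq c\,|\mathcal{A}/\mathcal{B}|\,|\mathcal{C}|^2.$$
   Context: For finite sets $X,Y\subset\mathbb{C}$, $X+Y:=\{x+y:x\in X,y\in Y\}$, $XY:=\{xy:x\in X,y\in Y\}$, and for $0\notin Y$, $X/Y:=\{x/y:x\in X,y\in Y\}$. *)

(* Defs.v *)
From Stdlib Require Import Reals List.
Import ListNotations.
Open Scope R_scope.

Definition Cx : Type := (R * R)%type.

Definition C0 : Cx := (0, 0).
Definition Cadd (x y : Cx) : Cx := (fst x + fst y, snd x + snd y).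
Definition Cmul (x y : Cx) : Cx :=
  (fst x * fst y - snd x * snd y, fst x * snd y + snd x * fst y).
Definition Cinv (x : Cx) : Cx :=
  let d := fst x * fst x + snd x * snd x in (fst x / d, - snd x / d).
Definition Cdiv (x y : Cx) : Cx := Cmul x (Cinv y).

Definition Cx_eq_dec (x y : Cx) : {x = y} + {x <> y}.
Proof.
  destruct x as [a b], y as [c d].
  destruct (Req_EM_T a c) as [H1|H1]; destruct (Req_EM_T b d) as [H2|H2];
    subst; [left; reflexivity | right | right | right]; intro H; inversion H; auto.
Defined.

(* Finite sets of complex numbers are represented by lists (duplicates allowed);
   the set denoted by l is {x | In x l}, its cardinality is the number of
   distinct entries. *)
Definition card (l : list Cx) : nat := length (nodup Cx_eq_dec l).

Definition sumset (X Y : list Cx) : list Cx :=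
  map (fun p => Cadd (fst p) (snd p)) (list_prod X Y).
Definition prodset (X Y : list Cx) : list Cx :=
  map (fun p => Cmul (fst p) (snd p)) (list_prod X Y).
Definition quotset (X Y : list Cx) : list Cx :=
  map (fun p => Cdiv (fst p) (snd p)) (list_prod X Y).

(* Main.v *)
Require Import Defs.
From Stdlib Require Import Reals List Lia Lra Psatz.
From Coquelicot Require Import Complex.
Import ListNotations.
Open Scope R_scope.

Definition nrm2 (w : Cx) : R := fst w * fst w + snd w * snd w.
Definition dot (w1 w2 : Cx) : R := fst w1 * fst w2 + snd w1 * snd w2.
Definition crs (w1 w2 : Cx) : R := snd w1 * fst w2 - fst w1 * snd w2.

Lemma nrm2_ge0 w : 0 <= nrm2 w.
Proof. unfold nrm2; nra. Qed.

Lemma nrm2_pos w : w <> C0 -> 0 < nrm2 w.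
Proof.
  destruct w as [x y]; unfold nrm2, C0; simpl; intro H.
  destruct (Req_dec x 0); destruct (Req_dec y 0); subst; try (exfalso; now apply H).
  all: nra.
Qed.

Lemma nrm2_mul x y : nrm2 (Cmult x y) = nrm2 x * nrm2 y.
Proof. destruct x, y; unfold nrm2; simpl; ring. Qed.

Lemma C0_RtoC : C0 = RtoC 0.
Proof. reflexivity. Qed.

Lemma Cmult_nz x y : x <> C0 -> y <> C0 -> Cmult x y <> C0.
Proof.
  intros Hx Hy H. assert (H1 := nrm2_pos _ Hx). assert (H2 := nrm2_pos _ Hy).
  assert (nrm2 (Cmult x y) = 0) by (rewrite H; unfold nrm2, C0; simpl; ring).
  rewrite nrm2_mul in H0. nra.
Qed.

Lemma Cmult_integral x y : x <> C0 -> Cmult x y = C0 -> y = C0.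
Proof.
  intros Hx H. destruct (Cx_eq_dec y C0) as [E|E]; auto.
  exfalso; exact (Cmult_nz x y Hx E H).
Qed.

Lemma Cdiv_eq x y : Defs.Cdiv x y = Cdiv x y.
Proof.
  destruct x as [a b], y as [c d]; unfold Defs.Cdiv, Defs.Cinv, Cdiv, Cinv, Cmul; simpl.
  rewrite !Rmult_1_r. reflexivity.
Qed.

Lemma key_mul a b : b <> C0 -> Cmult (Defs.Cdiv a b) b = a.
Proof.
  intro Hb. rewrite Cdiv_eq. field. exact Hb.
Qed.

Definition oct0 (x y : R) : nat :=
  if Rlt_dec 0 x then (if Rle_dec y x then 0%nat else 1%nat)
  else (if Rle_dec (-x) y then 2%nat else 3%nat).
Definition oct (w : Cx) : nat :=
  if Rle_dec 0 (snd w) then oct0 (fst w) (snd w) else (4 + oct0 (- fst w) (- snd w))%nat.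

Lemma oct0_lt x y : (oct0 x y < 4)%nat.
Proof. unfold oct0; repeat destruct Rlt_dec; repeat destruct Rle_dec; lia. Qed.

Lemma oct_lt w : (oct w < 8)%nat.
Proof. unfold oct; destruct Rle_dec; pose proof (oct0_lt (fst w) (snd w));
  pose proof (oct0_lt (- fst w) (- snd w)); lia. Qed.

Lemma oct0_G x1 y1 x2 y2 : 0 <= y1 -> 0 <= y2 -> (x1, y1) <> C0 -> (x2,y2) <> C0 ->
  oct0 x1 y1 = oct0 x2 y2 ->
  y1 * x2 - x1 * y2 <= x1 * x2 + y1 * y2 /\ - (y1 * x2 - x1 * y2) <= x1 * x2 + y1 * y2.
Proof.
  intros h1 h2 n1 n2. unfold oct0.
  destruct (Rlt_dec 0 x1); destruct (Rlt_dec 0 x2);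
  destruct (Rle_dec y1 x1); destruct (Rle_dec y2 x2);
  destruct (Rle_dec (-x1) y1); destruct (Rle_dec (-x2) y2); intro E; try discriminate E;
  split; nra.
Qed.
Lemma oct_G w1 w2 : w1 <> C0 -> w2 <> C0 -> oct w1 = oct w2 ->
  crs w1 w2 <= dot w1 w2 /\ - crs w1 w2 <= dot w1 w2.
Proof.
  destruct w1 as [x1 y1], w2 as [x2 y2]; unfold oct, crs, dot; simpl; intros n1 n2.
  assert (m1 : (-x1, -y1) <> C0) by (intro E; injection E; intros; apply n1; unfold C0; f_equal; lra).
  assert (m2 : (-x2, -y2) <> C0) by (intro E; injection E; intros; apply n2; unfold C0; f_equal; lra).
  pose proof (oct0_lt x1 y1); pose proof (oct0_lt x2 y2);
  pose proof (oct0_lt (-x1) (-y1)); pose proof (oct0_lt (-x2) (-y2)).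
  destruct (Rle_dec 0 y1); destruct (Rle_dec 0 y2); intro E; try lia.
  - apply oct0_G; auto.
  - apply Rnot_le_lt in n. apply Rnot_le_lt in n0.
    assert (E' : oct0 (-x1) (-y1) = oct0 (-x2) (-y2)) by lia.
    destruct (oct0_G (-x1) (-y1) (-x2) (-y2) ltac:(lra) ltac:(lra) m1 m2 E') as [u v]. split; nra.
Qed.

Lemma dot_mul_ge0 b b' c c' :
  crs b b' <= dot b b' -> - crs b b' <= dot b b' ->
  crs c c' <= dot c c' -> - crs c c' <= dot c c' ->
  0 <= dot (Cmult b c) (Cmult b' c').
Proof.
  intros. assert (E : dot (Cmult b c) (Cmult b' c') = dot b b' * dot c c' - crs b b' * crs c c').
  { destruct b, b', c, c'; unfold dot, crs; simpl; ring. }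
  rewrite E. nra.
Qed.

Lemma nrm2_add x y : nrm2 (Cplus x y) = nrm2 x + nrm2 y + 2 * dot x y.
Proof. destruct x, y; unfold nrm2, dot; simpl; ring. Qed.

Lemma nrm2_sub x y : nrm2 (Cminus y x) = nrm2 x + nrm2 y - 2 * dot x y.
Proof. destruct x, y; unfold nrm2, dot, Cminus, Copp, Cplus; simpl; ring. Qed.

Lemma lagrange x y : dot x y * dot x y + crs x y * crs x y = nrm2 x * nrm2 y.
Proof. destruct x, y; unfold nrm2, dot, crs; simpl; ring. Qed.

Lemma oct_contra w1 w2 : w1 <> C0 -> w2 <> C0 -> oct w1 = oct w2 ->
  nrm2 w1 <= nrm2 (Cminus w2 w1) -> nrm2 w2 <= nrm2 (Cminus w2 w1) -> False.
Proof.
  intros n1 n2 E h1 h2. destruct (oct_G _ _ n1 n2 E) as [g1 g2].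
  rewrite nrm2_sub in h1, h2. pose proof (lagrange w1 w2).
  pose proof (nrm2_pos _ n1); pose proof (nrm2_pos _ n2).
  set (d := dot w1 w2) in *. set (c := crs w1 w2) in *.
  assert (0 <= d) by lra.
  assert (4 * d * d <= nrm2 w1 * nrm2 w2) by nra.
  assert (c * c <= d * d) by nra.
  assert (d = 0) by nra. nra.
Qed.

Lemma NoDup_map_inj {A B : Type} (f : A -> B) (l : list A) :
  (forall x y, In x l -> In y l -> f x = f y -> x = y) -> NoDup l -> NoDup (map f l).
Proof.
  induction l as [|a l IH]; intros Hinj Hnd; simpl; constructor.
  - intro Hin. apply in_map_iff in Hin as [x [Hx Hxl]].
    inversion Hnd; subst. assert (x = a) by (apply Hinj; simpl; auto). subst; contradiction.
  - inversion Hnd; subst. apply IH; auto. intros; apply Hinj; simpl; auto.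
Qed.

Lemma nrm2_swap x y : nrm2 (Cminus x y) = nrm2 (Cminus y x).
Proof. destruct x, y; unfold nrm2, Cminus, Cplus, Copp; simpl; ring. Qed.

Lemma Cminus_C0 q z : Cminus q z = C0 -> q = z.
Proof. destruct q, z; unfold Cminus, Cplus, Copp, C0; simpl; intro F; injection F; intros;
  f_equal; lra. Qed.

Lemma packing (z : Cx) (L : list Cx) : NoDup L ->
  (forall q q', In q L -> In q' L -> q <> q' -> nrm2 (Cminus z q) <= nrm2 (Cminus q' q)) ->
  (length L <= 9)%nat.
Proof.
  intros Hnd H.
  set (cls := fun q => if Cx_eq_dec q z then 8%nat else oct (Cminus q z)).
  assert (Hnd2 : NoDup (map cls L)).
  { apply NoDup_map_inj; auto. intros q q' Hq Hq' E.
    destruct (Cx_eq_dec q q') as [|Hne]; auto. exfalso.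
    unfold cls in E.
    destruct (Cx_eq_dec q z) as [e1|e1]; destruct (Cx_eq_dec q' z) as [e2|e2].
    - apply Hne; congruence.
    - pose proof (oct_lt (Cminus q' z)); lia.
    - pose proof (oct_lt (Cminus q z)); lia.
    - assert (n1 : Cminus q z <> C0).
      { intro F. apply e1. apply Cminus_C0; exact F. }
      assert (n2 : Cminus q' z <> C0).
      { intro F. apply e2. apply Cminus_C0; exact F. }
      apply (oct_contra _ _ n1 n2 E).
      + replace (Cminus (Cminus q' z) (Cminus q z)) with (Cminus q' q) by ring.
        rewrite nrm2_swap. apply H; auto.
      + replace (Cminus (Cminus q' z) (Cminus q z)) with (Cminus q' q) by ring.
        rewrite nrm2_swap, (nrm2_swap q' q). apply H; auto. }
  assert (Hincl : incl (map cls L) (seq 0 9)).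
  { intros n Hn. apply in_map_iff in Hn as [q [Hq _]]. apply in_seq.
    unfold cls in Hq. destruct Cx_eq_dec. lia. pose proof (oct_lt (Cminus q z)); lia. }
  pose proof (NoDup_incl_length Hnd2 Hincl). rewrite length_map, length_seq in H0. exact H0.
Qed.

Definition Gp (w1 w2 : Cx) : Prop := crs w1 w2 <= dot w1 w2 /\ - crs w1 w2 <= dot w1 w2.

Lemma nrm2_C0 : nrm2 C0 = 0.
Proof. unfold nrm2, C0; simpl; ring. Qed.

Lemma geo (a b a' b' c1 c2 : Cx) : b <> C0 -> b' <> C0 -> c1 <> C0 -> c2 <> C0 ->
  Gp b b' -> Gp c1 c2 ->
  Cplus (Cmult b c1) (Cmult b' c2) <> C0 /\
  nrm2 (Cminus (Defs.Cdiv (Cplus (Cmult a c1) (Cmult a' c2)) (Cplus (Cmult b c1) (Cmult b' c2)))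
     (Defs.Cdiv a b)) <= nrm2 (Cminus (Defs.Cdiv a' b') (Defs.Cdiv a b)).
Proof.
  intros hb hb' hc1 hc2 [g1 g2] [g3 g4].
  pose proof (dot_mul_ge0 _ _ _ _ g1 g2 g3 g4) as Hd.
  pose proof (key_mul a b hb) as Ha. pose proof (key_mul a' b' hb') as Ha'.
  set (q := Defs.Cdiv a b) in *. set (q' := Defs.Cdiv a' b') in *.
  set (x1 := Cmult b c1) in *. set (x2 := Cmult b' c2) in *.
  assert (n1 : 0 < nrm2 x1) by (apply nrm2_pos, Cmult_nz; auto).
  assert (n2 : 0 < nrm2 x2) by (apply nrm2_pos, Cmult_nz; auto).
  assert (nU : nrm2 (Cplus x1 x2) = nrm2 x1 + nrm2 x2 + 2 * dot x1 x2) by apply nrm2_add.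
  assert (HU : Cplus x1 x2 <> C0).
  { intro E. rewrite E, nrm2_C0 in nU. lra. }
  split; auto.
  rewrite Cdiv_eq.
  assert (Id : Cmult (Cminus (Cdiv (Cplus (Cmult a c1) (Cmult a' c2)) (Cplus x1 x2)) q) (Cplus x1 x2)
              = Cmult (Cminus q' q) x2).
  { rewrite <- Ha, <- Ha'. unfold x1, x2. field. rewrite <- C0_RtoC. exact HU. }
  assert (Id2 := f_equal nrm2 Id). rewrite !nrm2_mul in Id2.
  pose proof (nrm2_ge0 (Cminus q' q)).
  assert (0 < nrm2 (Cplus x1 x2)) by lra.
  set (w := nrm2 (Cminus (Cdiv (Cplus (Cmult a c1) (Cmult a' c2)) (Cplus x1 x2)) q)) in *.
  assert (w * nrm2 (Cplus x1 x2) <= nrm2 (Cminus q' q) * nrm2 (Cplus x1 x2)) by nra.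
  nra.
Qed.

Lemma Cnz_RtoC x : x <> C0 -> x <> RtoC 0.
Proof. intros H; exact H. Qed.

Lemma inj_pair (a b a' b' c1 c2 d1 d2 : Cx) : b <> C0 -> b' <> C0 ->
  Defs.Cdiv a b <> Defs.Cdiv a' b' ->
  (Cplus (Cmult a c1) (Cmult a' c2), Cplus (Cmult b c1) (Cmult b' c2)) =
  (Cplus (Cmult a d1) (Cmult a' d2), Cplus (Cmult b d1) (Cmult b' d2)) ->
  c1 = d1 /\ c2 = d2.
Proof.
  intros hb hb' hq E.
  assert (EV : Cplus (Cmult a c1) (Cmult a' c2) = Cplus (Cmult a d1) (Cmult a' d2)) by exact (f_equal fst E).
  assert (EU : Cplus (Cmult b c1) (Cmult b' c2) = Cplus (Cmult b d1) (Cmult b' d2)) by exact (f_equal snd E).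
  clear E.
  pose proof (key_mul a b hb) as Ha. pose proof (key_mul a' b' hb') as Ha'.
  set (q := Defs.Cdiv a b) in *. set (q' := Defs.Cdiv a' b') in *.
  rewrite <- Ha, <- Ha' in EV.
  assert (K0 : Cmult (Cminus q' q) (Cmult b' (Cminus c2 d2)) = C0).
  { rewrite C0_RtoC.
    replace (Cmult (Cminus q' q) (Cmult b' (Cminus c2 d2))) with
      (Cminus (Cminus (Cplus (Cmult (Cmult q b) c1) (Cmult (Cmult q' b') c2))
                      (Cplus (Cmult (Cmult q b) d1) (Cmult (Cmult q' b') d2)))
              (Cmult q (Cminus (Cplus (Cmult b c1) (Cmult b' c2)) (Cplus (Cmult b d1) (Cmult b' d2)))))
      by ring.
    rewrite EV, EU. ring. }
  assert (hq' : Cminus q' q <> C0).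
  { intro F. apply hq. symmetry. apply Cminus_C0. exact F. }
  apply Cmult_integral in K0; auto. apply Cmult_integral in K0; auto.
  apply Cminus_C0 in K0. subst d2.
  assert (H1 : Cmult b (Cminus c1 d1) = C0).
  { rewrite C0_RtoC.
    replace (Cmult b (Cminus c1 d1)) with
      (Cminus (Cplus (Cmult b c1) (Cmult b' c2)) (Cplus (Cmult b d1) (Cmult b' c2))) by ring.
    rewrite EU. ring. }
  apply Cmult_integral in H1; auto. apply Cminus_C0 in H1. auto.
Qed.

Fixpoint argmin {T : Type} (f : T -> R) (x : T) (l : list T) : T :=
  match l with
  | nil => x
  | y :: l' => let m := argmin f y l' in if Rle_dec (f x) (f m) then x else m
  end.

Lemma argmin_spec {T : Type} (f : T -> R) (l : list T) : forall x,
  In (argmin f x l) (x :: l) /\ forall y, In y (x :: l) -> f (argmin f x l) <= f y.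
Proof.
  induction l as [|y l IH]; intro x; simpl.
  - split; auto. intros z [<-|[]]; lra.
  - destruct (IH y) as [H1 H2]. destruct Rle_dec as [Hle|Hle].
    + split; auto. intros z [<-|Hz]; [lra|]. specialize (H2 z Hz). lra.
    + split. { simpl in H1; destruct H1; auto. }
      intros z [<-|Hz]; [lra|]. apply H2; exact Hz.
Qed.

Lemma NoDup_list_prod {A B : Type} (l1 : list A) (l2 : list B) :
  NoDup l1 -> NoDup l2 -> NoDup (list_prod l1 l2).
Proof.
  induction l1 as [|a l1 IH]; intros h1 h2; simpl. constructor.
  inversion h1; subst. apply NoDup_app.
  - apply NoDup_map_inj; auto. intros x y _ _ E; injection E; auto.
  - apply IH; auto.
  - intros p Hp Hp'. apply in_map_iff in Hp as [y [<- _]].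
    apply in_prod_iff in Hp' as [Ha _]. contradiction.
Qed.

Lemma reps {T : Type} (key : T -> Cx) (l : list T) : exists Rl,
  incl Rl l /\ NoDup (map key Rl) /\ length Rl = length (nodup Cx_eq_dec (map key l)).
Proof.
  induction l as [|x l IH].
  - exists nil. repeat split; simpl; auto. intros z []. constructor.
  - destruct IH as [Rl [h1 [h2 h3]]]. simpl. destruct in_dec as [Hin|Hin].
    + exists Rl. repeat split; auto. intros z Hz. right; auto.
    + exists (x :: Rl). repeat split.
      * intros z [<-|Hz]; [left|right]; auto.
      * simpl. constructor; auto. intro H. apply Hin.
        apply in_map_iff in H as [y [Hy HyR]]. rewrite <- Hy. apply in_map; auto.
      * simpl. rewrite h3. reflexivity.
Qed.

Definition cnt8 {T : Type} (f : T -> nat) (j : nat) (l : list T) : nat :=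
  length (filter (fun x => Nat.eqb (f x) j) l).

Lemma cnt8_sum {T : Type} (f : T -> nat) (l : list T) : (forall x, (f x < 8)%nat) ->
  length l = (cnt8 f 0 l + cnt8 f 1 l + cnt8 f 2 l + cnt8 f 3 l + cnt8 f 4 l + cnt8 f 5 l
             + cnt8 f 6 l + cnt8 f 7 l)%nat.
Proof.
  intro Hf. induction l as [|x l IH]; simpl; auto. unfold cnt8 in *; simpl.
  specialize (Hf x).
  destruct (f x) as [|[|[|[|[|[|[|[|n]]]]]]]]; simpl; try lia.
Qed.

Lemma pigeon8 {T : Type} (f : T -> nat) (l : list T) : (forall x, (f x < 8)%nat) ->
  exists j, (length l <= 8 * length (filter (fun x => Nat.eqb (f x) j) l))%nat.
Proof.
  intro Hf. pose proof (cnt8_sum f l Hf). unfold cnt8 in H.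
  destruct (Nat.le_gt_cases (length l) (8 * length (filter (fun x => Nat.eqb (f x) 0) l))); [eexists; eauto|].
  destruct (Nat.le_gt_cases (length l) (8 * length (filter (fun x => Nat.eqb (f x) 1) l))); [eexists; eauto|].
  destruct (Nat.le_gt_cases (length l) (8 * length (filter (fun x => Nat.eqb (f x) 2) l))); [eexists; eauto|].
  destruct (Nat.le_gt_cases (length l) (8 * length (filter (fun x => Nat.eqb (f x) 3) l))); [eexists; eauto|].
  destruct (Nat.le_gt_cases (length l) (8 * length (filter (fun x => Nat.eqb (f x) 4) l))); [eexists; eauto|].
  destruct (Nat.le_gt_cases (length l) (8 * length (filter (fun x => Nat.eqb (f x) 5) l))); [eexists; eauto|].
  destruct (Nat.le_gt_cases (length l) (8 * length (filter (fun x => Nat.eqb (f x) 6) l))); [eexists; eauto|].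
  destruct (Nat.le_gt_cases (length l) (8 * length (filter (fun x => Nat.eqb (f x) 7) l))); [eexists; eauto|].
  lia.
Qed.

Lemma sum_indic {X Y : Type} (g : X -> Y -> bool) x (ly : list Y) :
  list_sum (map (fun y => if g x y then 1%nat else 0%nat) ly) = length (filter (g x) ly).
Proof. induction ly as [|y ly IH]; simpl; auto. destruct (g x y); simpl; lia. Qed.

Lemma sum_map_add {Y : Type} (F G : Y -> nat) (ly : list Y) :
  list_sum (map (fun y => F y + G y)%nat ly) = (list_sum (map F ly) + list_sum (map G ly))%nat.
Proof. induction ly; simpl; lia. Qed.

Lemma double_count {X Y : Type} (g : X -> Y -> bool) (lx : list X) (ly : list Y) :
  list_sum (map (fun x => length (filter (g x) ly)) lx) =
  list_sum (map (fun y => length (filter (fun x => g x y) lx)) ly).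
Proof.
  induction lx as [|x lx IH]; simpl.
  - induction ly; simpl; auto.
  - rewrite IH.
    transitivity (list_sum (map (fun y => (if g x y then 1 else 0) + length (filter (fun x0 => g x0 y) lx))%nat ly)).
    + rewrite sum_map_add, sum_indic. reflexivity.
    + f_equal. apply map_ext. intro y. destruct (g x y); simpl; reflexivity.
Qed.

Lemma sum_le_const {Y : Type} (F : Y -> nat) k (ly : list Y) :
  (forall y, In y ly -> (F y <= k)%nat) -> (list_sum (map F ly) <= k * length ly)%nat.
Proof.
  induction ly as [|y ly IH]; intros H; simpl; [lia|].
  assert (F y <= k)%nat by (apply H; left; auto).
  assert (list_sum (map F ly) <= k * length ly)%nat by (apply IH; intros; apply H; right; auto).
  lia.
Qed.

Lemma sum_const {Y : Type} (F : Y -> nat) k (ly : list Y) :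
  (forall y, In y ly -> F y = k) -> list_sum (map F ly) = (k * length ly)%nat.
Proof.
  induction ly as [|y ly IH]; intros H; simpl; [lia|].
  rewrite H by (left; auto). rewrite IH by (intros; apply H; right; auto). lia.
Qed.

Lemma len_filter_mem {T : Type} (dec : forall x y : T, {x = y} + {x <> y}) (l Y : list T) :
  NoDup l -> NoDup Y -> incl l Y ->
  length l = length (filter (fun y => if in_dec dec y l then true else false) Y).
Proof.
  intros h1 h2 h3. apply Nat.le_antisymm.
  - apply NoDup_incl_length; auto. intros y Hy. apply filter_In. split; auto.
    destruct in_dec; auto.
  - apply NoDup_incl_length. apply NoDup_filter; auto.
    intros y Hy. apply filter_In in Hy as [_ Hy]. destruct in_dec; auto; discriminate.
Qed.

Definition key (p : Cx * Cx) : Cx := Defs.Cdiv (fst p) (snd p).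

Definition pair_dec (x y : Cx * Cx) : {x = y} + {x <> y}.
Proof.
  destruct x as [x1 x2], y as [y1 y2].
  destruct (Cx_eq_dec x1 y1); destruct (Cx_eq_dec x2 y2);
    [left; congruence | right; congruence | right; congruence | right; congruence].
Defined.

Definition cand (Rl : list (Cx * Cx)) (r : Cx * Cx) :=
  filter (fun s => if Cx_eq_dec (key s) (key r) then false else true) Rl.
Definition dist (r s : Cx * Cx) : R := nrm2 (Cminus (key s) (key r)).
Definition nbr (Rl : list (Cx * Cx)) (r : Cx * Cx) : Cx * Cx :=
  match cand Rl r with nil => r | s :: l => argmin (dist r) s l end.
Definition Fm (Rl : list (Cx * Cx)) (r : Cx * Cx) (p : Cx * Cx) : Cx * Cx :=
  (Cplus (Cmult (fst r) (fst p)) (Cmult (fst (nbr Rl r)) (snd p)),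
   Cplus (Cmult (snd r) (fst p)) (Cmult (snd (nbr Rl r)) (snd p))).
Definition Im (Rl : list (Cx * Cx)) (Cl : list Cx) (r : Cx * Cx) :=
  map (Fm Rl r) (list_prod Cl Cl).

Lemma nbr_spec Rl r : (exists s, In s Rl /\ key s <> key r) ->
  In (nbr Rl r) Rl /\ key (nbr Rl r) <> key r /\
  forall s, In s Rl -> key s <> key r -> dist r (nbr Rl r) <= dist r s.
Proof.
  intros [s0 [Hs0 Hk0]].
  assert (Hc : forall s, In s (cand Rl r) <-> In s Rl /\ key s <> key r).
  { intro s. unfold cand. rewrite filter_In. destruct Cx_eq_dec; split; intros [h1 h2]; auto;
    try discriminate; contradiction. }
  unfold nbr. destruct (cand Rl r) as [|s l] eqn:Ec.
  - exfalso. apply (proj2 (Hc s0)); auto.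
  - destruct (argmin_spec (dist r) l s) as [H1 H2].
    apply Hc in H1 as [H1 H1']. repeat split; auto.
    intros s' Hs' Hk'. apply H2. apply Hc; auto.
Qed.

Lemma NoDup_map_filter {T U : Type} (f : T -> U) (P : T -> bool) (l : list T) :
  NoDup (map f l) -> NoDup (map f (filter P l)).
Proof.
  induction l as [|x l IH]; simpl; intro H; auto.
  inversion H; subst. destruct (P x); simpl; auto. constructor; auto.
  intro Hin. apply H2. apply in_map_iff in Hin as [y [Hy Hyl]].
  apply filter_In in Hyl as [Hyl _]. rewrite <- Hy. apply in_map; auto.
Qed.

Lemma in_SA (A C : list Cx) a a' c1 c2 : In a A -> In a' A -> In c1 C -> In c2 C ->
  In (Cplus (Cmult a c1) (Cmult a' c2)) (nodup Cx_eq_dec (sumset (prodset A C) (prodset A C))).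
Proof.
  intros. apply nodup_In. unfold sumset.
  change (Cplus (Cmult a c1) (Cmult a' c2)) with
    ((fun p => Cadd (fst p) (snd p)) (Cmul a c1, Cmul a' c2)).
  apply in_map. apply in_prod; unfold prodset;
  [change (Cmul a c1) with ((fun p => Cmul (fst p) (snd p)) (a, c1))
  |change (Cmul a' c2) with ((fun p => Cmul (fst p) (snd p)) (a', c2))];
  apply in_map; apply in_prod; auto.
Qed.

Lemma core (A B C Cl : list Cx) (Rl : list (Cx * Cx)) j j' :
  incl Rl (list_prod A B) -> NoDup (map key Rl) ->
  (forall r, In r Rl -> snd r <> C0 /\ oct (snd r) = j) ->
  NoDup Cl -> incl Cl C -> (forall c, In c Cl -> c <> C0 /\ oct c = j') ->
  (2 <= length Rl)%nat ->
  (length Rl * (length Cl * length Cl) <=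
   9 * (card (sumset (prodset A C) (prodset A C)) * card (sumset (prodset B C) (prodset B C))))%nat.
Proof.
  intros hRAB hRk hRb hCnd hCC hCo h2.
  set (YA := nodup Cx_eq_dec (sumset (prodset A C) (prodset A C))).
  set (YB := nodup Cx_eq_dec (sumset (prodset B C) (prodset B C))).
  set (Y := list_prod YA YB).
  assert (hY : NoDup Y) by (apply NoDup_list_prod; apply NoDup_nodup).
  assert (hYl : length Y = (card (sumset (prodset A C) (prodset A C)) * card (sumset (prodset B C) (prodset B C)))%nat)
    by (unfold Y; rewrite length_prod; reflexivity).
  assert (hother : forall r, In r Rl -> exists s, In s Rl /\ key s <> key r).
  { intros r Hr. destruct Rl as [|r1 [|r2 Rl']]; simpl in h2; try lia.
    inversion hRk; subst. simpl in H1.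
    destruct (Cx_eq_dec (key r1) (key r)) as [E|E].
    - exists r2. split; [simpl; auto|]. rewrite <- E. intro F; apply H1; left; auto.
    - exists r1. split; [simpl; auto|]. auto. }
  assert (hkey : forall r s, In r Rl -> In s Rl -> key r = key s -> r = s).
  { clear -hRk. induction Rl as [|x l IH]; simpl; [tauto|]. inversion hRk; subst.
    intros r s [<-|Hr] [<-|Hs] E; auto.
    - exfalso; apply H1. rewrite E. apply in_map; auto.
    - exfalso; apply H1. rewrite <- E. apply in_map; auto. }
  assert (hIm_nd : forall r, In r Rl -> NoDup (Im Rl Cl r)).
  { intros r Hr. destruct (nbr_spec Rl r (hother r Hr)) as [Hn [Hnk _]].
    apply NoDup_map_inj; [|apply NoDup_list_prod; auto].
    intros [c1 c2] [d1 d2] _ _ E. unfold Fm in E; simpl in E.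
    destruct (inj_pair (fst r) (snd r) (fst (nbr Rl r)) (snd (nbr Rl r)) c1 c2 d1 d2
      (proj1 (hRb r Hr)) (proj1 (hRb _ Hn)) (fun F => Hnk (eq_sym F)) E). subst; auto. }
  assert (hIm_in : forall r, In r Rl -> incl (Im Rl Cl r) Y).
  { intros r Hr y Hy. destruct (nbr_spec Rl r (hother r Hr)) as [Hn _].
    apply in_map_iff in Hy as [[c1 c2] [<- Hp]]. apply in_prod_iff in Hp as [Hc1 Hc2].
    pose proof (hRAB r Hr) as H1. pose proof (hRAB _ Hn) as H2.
    destruct r as [a b]. destruct (nbr Rl (a, b)) as [a' b'] eqn:En.
    apply in_prod_iff in H1 as [Ha Hb]. apply in_prod_iff in H2 as [Ha' Hb'].
    unfold Fm; rewrite En; simpl. apply in_prod; apply in_SA; auto. }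
  assert (hIm_len : forall r, In r Rl -> length (Im Rl Cl r) = (length Cl * length Cl)%nat).
  { intros; unfold Im; rewrite length_map, length_prod; auto. }
  set (g := fun r y => if in_dec pair_dec y (Im Rl Cl r) then true else false).
  assert (S1 : list_sum (map (fun r => length (Im Rl Cl r)) Rl) = (length Rl * (length Cl * length Cl))%nat).
  { rewrite (sum_const _ (length Cl * length Cl)); [lia|]. auto. }
  assert (S2 : list_sum (map (fun r => length (Im Rl Cl r)) Rl) =
               list_sum (map (fun r => length (filter (g r) Y)) Rl)).
  { f_equal. apply map_ext_in. intros r Hr. apply len_filter_mem; auto. }
  rewrite double_count in S2.
  assert (S3 : (list_sum (map (fun y => length (filter (fun r => g r y) Rl)) Y) <= 9 * length Y)%nat).
  { apply sum_le_const. intros y Hy.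
    set (Ry := filter (fun r => g r y) Rl).
    assert (hRy : forall r, In r Ry -> In r Rl /\ In y (Im Rl Cl r)).
    { intros r Hr. apply filter_In in Hr as [h1 h3]. unfold g in h3.
      destruct in_dec; [auto|discriminate]. }
    rewrite <- (length_map key Ry).
    apply (packing (Defs.Cdiv (fst y) (snd y))).
    { apply NoDup_map_filter; auto. }
    intros q q' Hq Hq' Hqq.
    apply in_map_iff in Hq as [r [<- Hr]]. apply in_map_iff in Hq' as [s [<- Hs]].
    apply hRy in Hr as [Hr Hyr]. apply hRy in Hs as [Hs _].
    destruct (nbr_spec Rl r (hother r Hr)) as [Hn [Hnk Hmin]].
    specialize (Hmin s Hs (fun F => Hqq (eq_sym F))).
    unfold dist in Hmin. eapply Rle_trans; [|exact Hmin].
    apply in_map_iff in Hyr as [[c1 c2] [<- Hp]]. apply in_prod_iff in Hp as [Hc1 Hc2].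
    destruct (hRb r Hr) as [hb hbj]. destruct (hRb _ Hn) as [hb' hbj'].
    destruct (hCo c1 Hc1) as [hc1 hcj1]. destruct (hCo c2 Hc2) as [hc2 hcj2].
    assert (G1 : Gp (snd r) (snd (nbr Rl r))) by (apply oct_G; auto; congruence).
    assert (G2 : Gp c1 c2) by (apply oct_G; auto; congruence).
    destruct (geo (fst r) (snd r) (fst (nbr Rl r)) (snd (nbr Rl r)) c1 c2 hb hb' hc1 hc2 G1 G2)
      as [_ Hg].
    exact Hg. }
  lia.
Qed.

Lemma small_card (A C Cl : list Cx) : A <> nil -> ~ In C0 A -> NoDup Cl -> incl Cl C ->
  (length Cl <= card (sumset (prodset A C) (prodset A C)))%nat.
Proof.
  intros hA h0 hnd hinc. destruct A as [|a A']; [congruence|].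
  assert (ha : a <> C0) by (intro E; apply h0; left; auto).
  assert (ha2 : Cplus a a <> C0).
  { intro E. assert (nrm2 (Cplus a a) = 0) by (rewrite E; apply nrm2_C0).
    rewrite nrm2_add in H. pose proof (nrm2_pos a ha).
    assert (dot a a = nrm2 a) by (unfold dot, nrm2; ring). lra. }
  unfold card.
  rewrite <- (length_map (fun c : Cx => Cplus (Cmult a c) (Cmult a c)) Cl).
  apply NoDup_incl_length.
  - apply NoDup_map_inj; auto. intros c d _ _ E.
    assert (K : Cmult (Cplus a a) (Cminus c d) = C0).
    { rewrite C0_RtoC.
      replace (Cmult (Cplus a a) (Cminus c d)) with
        (Cminus (Cplus (Cmult a c) (Cmult a c)) (Cplus (Cmult a d) (Cmult a d))) by ring.
      rewrite E. ring. }
    apply Cmult_integral in K; auto. apply Cminus_C0; auto.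
  - intros y Hy. apply in_map_iff in Hy as [c [<- Hc]]. apply in_SA; simpl; auto.
Qed.

Theorem lemma2 :
  exists c : R, 0 < c /\
  forall A B C : list Cx,
    A <> nil -> B <> nil -> C <> nil ->
    ~ In C0 A -> ~ In C0 B -> ~ In C0 C ->
    INR (card (sumset (prodset A C) (prodset A C))) *
    INR (card (sumset (prodset B C) (prodset B C)))
    >= c * INR (card (quotset A B)) * INR (card C) ^ 2.
Proof.
  exists (1 / 4608). split; [lra|].
  intros A B C hA hB hC h0A h0B h0C.
  destruct (reps key (list_prod A B)) as [Rl [hR1 [hR2 hR3]]].
  assert (Ek : card (quotset A B) = length Rl) by (rewrite hR3; reflexivity).
  destruct (pigeon8 (fun r => oct (snd r)) Rl (fun r => oct_lt (snd r))) as [j Hj].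
  set (R' := filter (fun x => Nat.eqb (oct (snd x)) j) Rl) in Hj.
  set (Cn := nodup Cx_eq_dec C).
  destruct (pigeon8 oct Cn oct_lt) as [j' Hj'].
  set (Cl := filter (fun x => Nat.eqb (oct x) j') Cn) in Hj'.
  assert (EC : card C = length Cn) by reflexivity.
  assert (hCl_nd : NoDup Cl) by (apply NoDup_filter, NoDup_nodup).
  assert (hCl_inc : incl Cl C).
  { intros c Hc. apply filter_In in Hc as [Hc _]. apply nodup_In in Hc; auto. }
  set (PA := card (sumset (prodset A C) (prodset A C))).
  set (PB := card (sumset (prodset B C) (prodset B C))).
  assert (Hmain : (length R' * (length Cl * length Cl) <= 9 * (PA * PB))%nat).
  { destruct (Nat.le_gt_cases 2 (length R')) as [H2|H2].
    - apply (core A B C Cl R' j j').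
      + intros r Hr. apply filter_In in Hr as [Hr _]. auto.
      + apply NoDup_map_filter; auto.
      + intros r Hr. apply filter_In in Hr as [Hr Ho]. apply Nat.eqb_eq in Ho. split; auto.
        apply hR1 in Hr. destruct r as [a b]. apply in_prod_iff in Hr as [_ Hb].
        intro E; apply h0B; simpl in E; subst; auto.
      + auto.
      + auto.
      + intros c Hc. pose proof Hc as Hc'. apply filter_In in Hc' as [_ Ho].
        apply Nat.eqb_eq in Ho. split; auto. intro E; apply h0C; subst; apply hCl_inc; auto.
      + auto.
    - pose proof (small_card A C Cl hA h0A hCl_nd hCl_inc).
      pose proof (small_card B C Cl hB h0B hCl_nd hCl_inc).
      fold PA in H. fold PB in H0. nia. }
  assert (Hnat : (card (quotset A B) * (card C * card C) <= 4608 * (PA * PB))%nat).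
  { rewrite Ek, EC.
    assert (length Rl * (length Cn * length Cn) <=
            (8 * length R') * ((8 * length Cl) * (8 * length Cl)))%nat.
    { apply Nat.mul_le_mono; auto. apply Nat.mul_le_mono; auto. }
    lia. }
  apply le_INR in Hnat. rewrite !mult_INR in Hnat.
  replace (INR 4608) with 4608 in Hnat by (simpl; lra).
  simpl pow. lra.
Qed.
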